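(* Let $\mathcal O_\ast:\mathrm{Agg}^{\rm forest}\to\mathrm{Set}$ be the trivial (constant one-point) functor. Then $k_!(\mathcal O_\ast)\cong\mathcal O_{\rm genus}$ as functors $\mathrm{Agg}^{\rm ctd}\to\mathrm{Set}$. Concretely, for each finite set $S$ the set of connected components of the comma category $(k\downarrow *_S)$ is in natural bijection with $\mathbb N_0$, via the loop number $b_1=|E|-|V|+1$ of the ghost graph of $\phi:X\to *_S$.
   Context: A graph is $(F,V,\partial,\imath)$ with finite flag set $F$, vertex set $V$, incidence $\partial:F\to V$ and involution $\imath$ (2-element orbits are edges, fixed points outer flags); an aggregate is a graph with $\imath=\mathrm{id}$, and $*_S$ is the one-vertex aggregate with flag set $S$. For a graph morphism between aggregates, given by a surjection on vertices, an injection on flags in the contravariant direction, and a fixed-point-free involution on the flags not in the image, the ghost graph is the source aggregate with this involution added (so its edges are the ''virtually contracted'' pairs). $\mathrm{Agg}^{\rm ctd}$ is the category of aggregates whose morphisms are generated by isomorphisms, virtual edge contractions ${}_s\circ_t$ (for outer flags $s,t$ at distinct vertices: merge $\partial s,\partial t$, delete $s,t$, ghost edge $\{s,t\}$) and virtual loop contractions $\circ_{st}$ (for distinct $s,t$ at one vertex: delete $s,t$); $\mathrm{Agg}^{\rm forest}$ is the subcategory generated by isomorphisms and virtual edge contractions, and $k:\mathrm{Agg}^{\rm forest}\to\mathrm{Agg}^{\rm ctd}$ is the inclusion. For a functor $\mathcal O:\mathrm{Agg}^{\rm forest}\to\mathrm{Set}$, $k_!(\mathcal O)$ is the pointwise left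 Kan extension: $k_!(\mathcal O)(Y)=\mathrm{colim}_{(X,\phi)\in(k\downarrow Y)}\mathcal O(X)$, where $(k\downarrow Y)$ has objects pairs $(X,\phi:X\to Y)$ with $\phi$ in $\mathrm{Agg}^{\rm ctd}$ and morphisms $\psi:X\to X'$ in $\mathrm{Agg}^{\rm forest}$ with $\phi'\psi=\phi$; morphisms of $\mathrm{Agg}^{\rm ctd}$ act by postcomposition. $\mathcal O_{\rm genus}(X)=\mathbb N_0^{V_X}$, with isomorphisms relabelling vertices, ${}_s\circ_t$ assigning $g(\partial s)+g(\partial t)$ to the merged vertex, and $\circ_{st}$ adding $1$ at $\partial s$ (other values unchanged). *)

(* Defs.v *)
From mathcomp Require Import all_boot.
From Stdlib Require Import Relations.Relation_Operators.
Set Implicit Arguments. Unset Strict Implicit. Unset Printing Implicit Defensive.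

(* An aggregate: a graph whose involution is the identity, i.e. a finite set
   of (outer) flags F, a finite set of vertices V and an incidence map. *)
Record agg := Agg { V : finType; F : finType; bd : F -> V }.

(* A graph morphism X -> Y between aggregates: a map on vertices,
   a (contravariant) map on flags, and the involution of the ghost graph on
   the flags of X (identity on the image of mf, fixed-point-free on the rest,
   for all morphisms in the categories below). *)
Record mor (X Y : agg) := Mor {
  mv : {ffun V X -> V Y};
  mf : {ffun F Y -> F X};
  mj : {ffun F X -> F X} }.

Definition compat X Y (m : mor X Y) := forall f : F Y, mv m (bd (mf m f)) = bd f.

Definition is_iso X Y (m : mor X Y) : Prop :=
  bijective (mv m) /\ bijective (mf m) /\ (forall x, mj m x = x) /\ compat m.

Definition deletes_st X Y (s t : F X) (m : mor X Y) : Prop :=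
  s != t /\ injective (mf m) /\
  (forall x, x \in codom (mf m) = (x != s) && (x != t)) /\
  mj m s = t /\ mj m t = s /\ (forall x, x != s -> x != t -> mj m x = x).

(* virtual edge contraction s o_t (up to relabelling of the target):
   merges bd s and bd t (distinct vertices) and nothing else *)
Definition is_econ X Y (s t : F X) (m : mor X Y) : Prop :=
  bd s != bd t /\ deletes_st s t m /\ compat m /\
  (forall w : V Y, exists v, mv m v = w) /\
  (forall u w : V X, mv m u = mv m w <->
     (u = w \/ (u = bd s /\ w = bd t) \/ (u = bd t /\ w = bd s))).

(* virtual loop contraction o_st (up to relabelling of the target) *)
Definition is_lcon X Y (s t : F X) (m : mor X Y) : Prop :=
  bd s = bd t /\ deletes_st s t m /\ compat m /\ bijective (mv m).

Definition comp X Y Z (m1 : mor X Y) (m2 : mor Y Z) : mor X Z :=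
  Mor [ffun v => mv m2 (mv m1 v)]
      [ffun z => mf m1 (mf m2 z)]
      [ffun x => if [pick y | mf m1 y == x] is Some y then mf m1 (mj m2 y)
                 else mj m1 x].

Inductive ctd : forall X Y, mor X Y -> Prop :=
| ctd_iso X Y (m : mor X Y) : is_iso m -> ctd m
| ctd_comp_iso X Y Z (m1 : mor X Y) (m2 : mor Y Z) :
    ctd m1 -> is_iso m2 -> ctd (comp m1 m2)
| ctd_comp_econ X Y Z (m1 : mor X Y) (m2 : mor Y Z) s t :
    ctd m1 -> is_econ s t m2 -> ctd (comp m1 m2)
| ctd_comp_lcon X Y Z (m1 : mor X Y) (m2 : mor Y Z) s t :
    ctd m1 -> is_lcon s t m2 -> ctd (comp m1 m2).

Inductive forest : forall X Y, mor X Y -> Prop :=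
| forest_iso X Y (m : mor X Y) : is_iso m -> forest m
| forest_comp_iso X Y Z (m1 : mor X Y) (m2 : mor Y Z) :
    forest m1 -> is_iso m2 -> forest (comp m1 m2)
| forest_comp_econ X Y Z (m1 : mor X Y) (m2 : mor Y Z) s t :
    forest m1 -> is_econ s t m2 -> forest (comp m1 m2).

Record cobj (Y : agg) := CObj { cX : agg; cphi : mor cX Y; cphiP : ctd cphi }.

Definition cstep Y (a b : cobj Y) : Prop :=
  exists psi : mor (cX a) (cX b), forest psi /\ comp psi (cphi b) = cphi a.

(* same connected component of (k | Y); the colimit of the constant
   one-point functor over (k | Y) is the set of these components *)
Definition cconn Y : cobj Y -> cobj Y -> Prop := clos_refl_sym_trans _ (@cstep Y).

(* action of k_!(O_* ) on the generating ctd morphisms: postcomposition *)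
Definition post_iso Y Y' (a : cobj Y) (psi : mor Y Y') (h : is_iso psi) : cobj Y' :=
  CObj (ctd_comp_iso (cphiP a) h).
Definition post_econ Y Y' (a : cobj Y) (psi : mor Y Y') s t (h : is_econ s t psi)
  : cobj Y' := CObj (ctd_comp_econ (cphiP a) h).
Definition post_lcon Y Y' (a : cobj Y) (psi : mor Y Y') s t (h : is_lcon s t psi)
  : cobj Y' := CObj (ctd_comp_lcon (cphiP a) h).

Definition genus_val (Y : agg) := {ffun V Y -> nat}.

(* O_genus on morphisms: relabel / sum the genera over each fibre
   (isomorphisms and edge contractions), plus 1 at the vertex of the
   contracted loop for loop contractions. *)
Definition gsum Y Y' (psi : mor Y Y') (g : genus_val Y) : genus_val Y' :=
  [ffun w => \sum_(v | mv psi v == w) g v].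
Definition gloop Y Y' (psi : mor Y Y') (s : F Y) (g : genus_val Y) : genus_val Y' :=
  [ffun w => \sum_(v | mv psi v == w) g v + (w == mv psi (bd s))].

(* loop number b_1 = |E| - |V| + 1 of the part of the ghost graph of
   phi : X -> Y lying over the vertex w of Y (ghost edges = pairs of flags
   exchanged by the ghost involution). *)
Definition loopnum Y (a : cobj Y) : genus_val Y :=
  [ffun w => (#|[set x : F (cX a) | (mj (cphi a) x != x)
                                  && (mv (cphi a) (bd x) == w)]| %/ 2 + 1)
             - #|[set v : V (cX a) | mv (cphi a) v == w]|].

(* Main.v *)
Require Import Defs.
From mathcomp Require Import all_boot.
From Stdlib Require Import Relations.Relation_Operators ProofIrrelevance.
From mathcomp Require Import zify.
Require Import Defs.
Set Implicit Arguments. Unset Strict Implicit. Unset Printing Implicit Defensive.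


Definition Ecnt X Y (m : mor X Y) (w : V Y) :=
  #|[set x : F X | (mj m x != x) && (mv m (bd x) == w)]|.
Definition Vcnt X Y (m : mor X Y) (w : V Y) := #|[set v : V X | mv m v == w]|.
Definition Lm X Y (m : mor X Y) : {ffun V Y -> nat} :=
  [ffun w => (Ecnt m w %/ 2 + 1) - Vcnt m w].

Lemma loopnumE Y (a : cobj Y) : loopnum a = Lm (cphi a).
Proof. by []. Qed.

Record good X Y (m : mor X Y) : Prop := Good {
  g_inj : injective (mf m);
  g_compat : compat m;
  g_inv : forall x, mj m (mj m x) = x;
  g_fix : forall x, (mj m x == x) = (x \in codom (mf m));
  g_bd : forall x, mv m (bd (mj m x)) = mv m (bd x);
  g_surj : forall w, exists v, mv m v = w;
  g_V : forall w, Vcnt m w <= Ecnt m w %/ 2 + 1 }.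

Lemma comp_mv X Y Z (m1 : mor X Y) (m2 : mor Y Z) v :
  mv (comp m1 m2) v = mv m2 (mv m1 v).
Proof. by rewrite /comp /= ffunE. Qed.
Lemma comp_mf X Y Z (m1 : mor X Y) (m2 : mor Y Z) z :
  mf (comp m1 m2) z = mf m1 (mf m2 z).
Proof. by rewrite /comp /= ffunE. Qed.
Lemma comp_mj_img X Y Z (m1 : mor X Y) (m2 : mor Y Z) y :
  injective (mf m1) -> mj (comp m1 m2) (mf m1 y) = mf m1 (mj m2 y).
Proof.
move=> inj; rewrite /comp /= ffunE.
case: pickP => [y' /eqP /inj -> // | /(_ y)]; by rewrite eqxx.
Qed.
Lemma comp_mj_nimg X Y Z (m1 : mor X Y) (m2 : mor Y Z) x :
  x \notin codom (mf m1) -> mj (comp m1 m2) x = mj m1 x.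
Proof.
move=> nx; rewrite /comp /= ffunE.
case: pickP => [y' /eqP Hy | //].
by case/negP: nx; rewrite -Hy codom_f.
Qed.

Lemma inv_even (T : finType) (f : T -> T) (n : nat) (A : {set T}) :
  #|A| <= n ->
  (forall x, f (f x) = x) -> (forall x, x \in A -> (f x \in A) && (f x != x)) ->
  ~~ odd #|A|.
Proof.
elim: n A => [|n IH] A.
  by rewrite leqn0 => /eqP ->.
move=> cA finv HA.
case: (set_0Vmem A) => [-> | [x xA]]; first by rewrite cards0.
have /andP [fxA fxx] := HA x xA.
have sub : [set x; f x] \subset A by rewrite subUset !sub1set xA fxA.
have cD := cardsDS sub.
rewrite cards2 eq_sym fxx in cD.
have le2 : 2 <= #|A| by have := subset_leq_card sub; rewrite cards2 eq_sym fxx.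
have HA' : forall y, y \in A :\: [set x; f x] ->
   (f y \in A :\: [set x; f x]) && (f y != y).
  move=> y; rewrite !inE => /andP [Hy yA].
  have /andP [fyA fyy] := HA y yA.
  rewrite fyA fyy andbT !andbT.
  apply/negP => /orP [/eqP e | /eqP e].
  - by move: Hy; rewrite -e finv eqxx orbT.
  - by move: Hy; rewrite -[y]finv e finv eqxx.
have := IH _ _ finv HA'.
rewrite cD.
have -> : #|A| = (#|A| - 2) + 2 by rewrite subnK.
rewrite addnK oddD /= addbF => H; apply: H.
by rewrite leq_subLR; apply: leq_trans cA _; rewrite add2n.
Qed.

Lemma good_even X Y (m : mor X Y) w : good m -> ~~ odd (Ecnt m w).
Proof.
case=> _ _ inv _ bdm _ _.
apply: (@inv_even _ (mj m) #|[set x : F X | (mj m x != x) && (mv m (bd x) == w)]|) => //.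
move=> x; rewrite !inE => /andP [H1 H2].
rewrite inv bdm H2 !andbT eq_sym H1 //.
Qed.


Lemma card_sum (T : finType) (P : pred T) : #|[set x | P x]| = \sum_(x | P x) 1.
Proof. by rewrite -sum1_card; apply: eq_bigl => x; rewrite inE. Qed.

Lemma Vcnt_comp X Y Z (m1 : mor X Y) (m2 : mor Y Z) w :
  Vcnt (comp m1 m2) w = \sum_(u | mv m2 u == w) Vcnt m1 u.
Proof.
rewrite /Vcnt card_sum.
rewrite (partition_big (mv m1) (fun u => mv m2 u == w)); last by move=> v; rewrite comp_mv.
apply: eq_bigr => u Hu; rewrite card_sum; apply: eq_bigl => v.
rewrite comp_mv; apply/andP/idP => [[_ ->] // | /eqP e]; by rewrite e Hu.
Qed.

Lemma Ecnt_comp X Y Z (m1 : mor X Y) (m2 : mor Y Z) w :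
  good m1 ->
  Ecnt (comp m1 m2) w = Ecnt m2 w + \sum_(u | mv m2 u == w) Ecnt m1 u.
Proof.
move=> g1.
set A2 := [set y | (mj m2 y != y) && (mv m2 (bd y) == w)].
set B := [set x | (mj m1 x != x) && (mv m2 (mv m1 (bd x)) == w)].
have eqA : [set x | (mj (comp m1 m2) x != x) && (mv (comp m1 m2) (bd x) == w)]
   = (mf m1 @: A2) :|: B.
  apply/setP => x; rewrite !inE comp_mv.
  case: (boolP (x \in codom (mf m1))) => [/codomP [y ->] | nx].
  - rewrite (@comp_mj_img _ _ _ m1 m2 y (g_inj g1)) (inj_eq (g_inj g1)) (g_compat g1).
    rewrite mem_imset ?inE; last exact: (g_inj g1).
    have -> : mj m1 (mf m1 y) == mf m1 y by rewrite (g_fix g1) codom_f.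
    by rewrite /= orbF.
  - rewrite comp_mj_nimg //.
    have -> : (x \in mf m1 @: A2) = false.
      apply/imsetP => [[y _ e]]; case/negP: nx; by rewrite e codom_f.
    by [].
rewrite /Ecnt eqA cardsU card_imset; last exact: (g_inj g1).
have -> : mf m1 @: A2 :&: B = set0.
  apply/setP => x; rewrite !inE; apply/andP => [[/imsetP [y _ ->]]].
  by rewrite (g_fix g1) codom_f.
rewrite cards0 subn0; congr (_ + _).
rewrite card_sum.
rewrite (partition_big (fun x => mv m1 (bd x)) (fun u => mv m2 u == w)); last first.
  by move=> x /andP [].
apply: eq_bigr => u Hu; rewrite card_sum; apply: eq_bigl => x.
apply/andP/idP => [[/andP [-> _] ->] // | /andP [-> /eqP e]]; by rewrite e Hu.
Qed.

Lemma half_sum (I : finType) (P : pred I) (a : nat) (b : I -> nat) :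
  ~~ odd a -> (forall u, ~~ odd (b u)) ->
  (a + \sum_(u | P u) b u) %/ 2 = a %/ 2 + \sum_(u | P u) (b u %/ 2).
Proof.
move=> ea eb.
have e2 : forall n, ~~ odd n -> n = 2 * (n %/ 2).
  move=> n en; rewrite mulnC divnK //; by rewrite dvdn2.
rewrite {1}(e2 a ea) (eq_bigr (fun u => 2 * (b u %/ 2))); last by move=> u _; rewrite -e2.
by rewrite -big_distrr /= -mulnDr mulKn.
Qed.

Lemma sum_sub (I : finType) (P : pred I) (a b : I -> nat) :
  (forall u, P u -> b u <= a u + 1) ->
  \sum_(u | P u) (a u + 1 - b u) + \sum_(u | P u) b u
    = \sum_(u | P u) a u + \sum_(u | P u) 1.
Proof.
move=> H; rewrite -!big_split; apply: eq_bigr => u Pu /=; by rewrite subnK ?H.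
Qed.

Lemma sum_le (I : finType) (P : pred I) (a b : I -> nat) :
  (forall u, P u -> b u <= a u) -> \sum_(u | P u) b u <= \sum_(u | P u) a u.
Proof. move=> H; exact: leq_sum. Qed.

Lemma Vcnt_sum X Y (m : mor X Y) w : Vcnt m w = \sum_(u | mv m u == w) 1.
Proof. exact: card_sum. Qed.

Lemma good_V_comp X Y Z (m1 : mor X Y) (m2 : mor Y Z) w :
  good m1 -> good m2 -> Vcnt (comp m1 m2) w <= Ecnt (comp m1 m2) w %/ 2 + 1.
Proof.
move=> g1 g2.
rewrite Vcnt_comp Ecnt_comp // half_sum; last by move=> u; exact: good_even.
  2: exact: good_even.
have h1 := @sum_le _ (fun u => mv m2 u == w) (fun u => Ecnt m1 u %/ 2 + 1) (Vcnt m1) (fun u _ => g_V g1 u).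
rewrite big_split /= -Vcnt_sum in h1.
have h2 := g_V g2 w.
lia.
Qed.

Lemma Lm_comp X Y Z (m1 : mor X Y) (m2 : mor Y Z) w :
  good m1 -> good m2 ->
  Lm (comp m1 m2) w = Lm m2 w + \sum_(u | mv m2 u == w) Lm m1 u.
Proof.
move=> g1 g2.
rewrite !ffunE Vcnt_comp Ecnt_comp // half_sum; last by move=> u; exact: good_even.
  2: exact: good_even.
have h1 := @sum_sub _ (fun u => mv m2 u == w) (fun u => Ecnt m1 u %/ 2) (Vcnt m1) (fun u _ => g_V g1 u).
rewrite -Vcnt_sum in h1.
have h2 := g_V g2 w.
have eL : \sum_(u | mv m2 u == w) Lm m1 u = \sum_(u | mv m2 u == w) (Ecnt m1 u %/ 2 + 1 - Vcnt m1 u) by apply: eq_bigr => u _; rewrite /Lm ffunE.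
rewrite eL.
lia.
Qed.

Lemma codom_comp_img X Y Z (m1 : mor X Y) (m2 : mor Y Z) y :
  injective (mf m1) ->
  (mf m1 y \in codom (mf (comp m1 m2))) = (y \in codom (mf m2)).
Proof.
move=> inj; apply/codomP/codomP => [[z]|[z ->]].
- rewrite comp_mf => /inj ->; by exists z.
- by exists z; rewrite comp_mf.
Qed.

Lemma codom_comp_nimg X Y Z (m1 : mor X Y) (m2 : mor Y Z) x :
  x \notin codom (mf m1) -> x \notin codom (mf (comp m1 m2)).
Proof.
move=> nx; apply/codomP => [[z]]; rewrite comp_mf => e.
by case/negP: nx; rewrite e codom_f.
Qed.

Lemma nimg_mj X Y (m : mor X Y) x : good m ->
  x \notin codom (mf m) -> mj m x \notin codom (mf m).
Proof.
move=> g nx; apply/negP; rewrite -(g_fix g) (g_inv g x) => /eqP e.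
by case/negP: nx; rewrite -(g_fix g) -e.
Qed.

Lemma good_comp X Y Z (m1 : mor X Y) (m2 : mor Y Z) :
  good m1 -> good m2 -> good (comp m1 m2).
Proof.
move=> g1 g2; have inj1 := g_inj g1; split.
- move=> a b; rewrite !comp_mf => /inj1 /(g_inj g2) //.
- move=> z; by rewrite comp_mv comp_mf (g_compat g1) (g_compat g2).
- move=> x; case: (boolP (x \in codom (mf m1))) => [/codomP [y ->] | nx].
  + by rewrite !comp_mj_img // (g_inv g2).
  + by rewrite (comp_mj_nimg _ nx) (comp_mj_nimg _ (nimg_mj g1 nx)) (g_inv g1).
- move=> x; case: (boolP (x \in codom (mf m1))) => [/codomP [y ->] | nx].
  + by rewrite comp_mj_img // (inj_eq inj1) (g_fix g2) codom_comp_img.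
  + rewrite (comp_mj_nimg _ nx) (negbTE (codom_comp_nimg m2 nx)).
    by apply/negbTE; rewrite (g_fix g1).
- move=> x; case: (boolP (x \in codom (mf m1))) => [/codomP [y ->] | nx].
  + by rewrite comp_mj_img // !comp_mv !(g_compat g1) (g_bd g2).
  + by rewrite (comp_mj_nimg _ nx) !comp_mv (g_bd g1).
- move=> w; have [u <-] := g_surj g2 w; have [v <-] := g_surj g1 u.
  by exists v; rewrite comp_mv.
- move=> w; exact: good_V_comp.
Qed.


Lemma del_mj X Y (m : mor X Y) s t x : deletes_st s t m ->
  (mj m x != x) = (x == s) || (x == t).
Proof.
case=> st [_ [_ [ms [mt mo]]]].
case: (eqVneq x s) => [-> | xs]; first by rewrite ms eq_sym st.
case: (eqVneq x t) => [-> | xt]; first by rewrite mt st.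
by rewrite mo // eqxx.
Qed.

Lemma Ecnt_del X Y (m : mor X Y) s t w : deletes_st s t m ->
  mv m (bd s) = mv m (bd t) ->
  Ecnt m w = if w == mv m (bd s) then 2 else 0.
Proof.
move=> d e; rewrite /Ecnt.
have st : s != t by case: d.
case: ifP => [/eqP -> | /negbT ne].
- have -> : 2 = (s != t).+1 by rewrite st.
  rewrite -(cards2 s t); apply: eq_card => x.
  rewrite !inE (del_mj _ d).
  case: (eqVneq x s) => [-> | _]; first by rewrite eqxx.
  case: (eqVneq x t) => [-> | _] //=; by rewrite e eqxx.
- apply/eqP; rewrite cards_eq0; apply/eqP/setP => x; rewrite !inE (del_mj _ d).
  case: (eqVneq x s) => [-> | _] /=; first by rewrite eq_sym (negbTE ne).
  case: (eqVneq x t) => [-> | _] //=; by rewrite -e eq_sym (negbTE ne).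
Qed.

Lemma Vcnt_inj X Y (m : mor X Y) w : injective (mv m) -> (exists v, mv m v = w) ->
  Vcnt m w = 1.
Proof.
move=> inj [v <-]; rewrite /Vcnt -(cards1 v); apply: eq_card => u.
by rewrite !inE (inj_eq inj).
Qed.

Lemma good_del X Y (m : mor X Y) s t : deletes_st s t m -> compat m ->
  mv m (bd s) = mv m (bd t) -> (forall w, exists v, mv m v = w) ->
  (forall w, Vcnt m w <= Ecnt m w %/ 2 + 1) -> good m.
Proof.
move=> d c e su hv.
have [st [inj [cod [ms [mt mo]]]]] := d.
split => //.
- move=> x; case: (eqVneq x s) => [-> | xs]; first by rewrite ms mt.
  case: (eqVneq x t) => [-> | xt]; first by rewrite mt ms.
  by rewrite !mo.
- move=> x; by rewrite cod -negb_or -(del_mj _ d) negbK.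
- move=> x; case: (eqVneq x s) => [-> | xs]; first by rewrite ms e.
  case: (eqVneq x t) => [-> | xt]; first by rewrite mt e.
  by rewrite mo.
Qed.

Lemma good_lcon X Y (m : mor X Y) s t : is_lcon s t m -> good m.
Proof.
case=> e [d [c bij]].
have inj := bij_inj bij.
have su : forall w, exists v, mv m v = w.
  by case: bij => g _ gK; move=> w; exists (g w); rewrite gK.
apply: (good_del d c); [by rewrite e | exact: su | by move=> w; rewrite (Vcnt_inj inj (su w)) leq_addl].
Qed.

Lemma Lm_lcon X Y (m : mor X Y) s t : is_lcon s t m ->
  Lm m = [ffun w => (w == mv m (bd s)) : nat].
Proof.
case=> e [d [c bij]].
have inj := bij_inj bij.
apply/ffunP => w; rewrite !ffunE (Ecnt_del _ d); last by rewrite e.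
rewrite Vcnt_inj //; last by case: bij => g _ gK; exists (g w); rewrite gK.
by case: ifP.
Qed.

Lemma econ_bd X Y (m : mor X Y) s t : is_econ s t m -> mv m (bd s) = mv m (bd t).
Proof. case=> _ [_ [_ [_ H]]]; apply/H; by right; left. Qed.

Lemma Vcnt_econ X Y (m : mor X Y) s t w : is_econ s t m ->
  Vcnt m w = if w == mv m (bd s) then 2 else 1.
Proof.
move=> h; have e := econ_bd h.
case: h => ne [d [c [su H]]].
rewrite /Vcnt; case: ifP => [/eqP -> | /negbT nw].
- have -> : 2 = (bd s != bd t).+1 by rewrite ne.
  rewrite -(cards2 (bd s) (bd t)); apply: eq_card => u; rewrite !inE.
  apply/eqP/orP => [/H [-> | [[-> _] | [-> _]]] | [/eqP -> | /eqP ->]] //.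
  + by left.
  + by left.
  + by right.
- have [v ev] := su w.
  rewrite -(cards1 v); apply: eq_card => u; rewrite !inE.
  apply/eqP/eqP => [eu | ->] //.
  have : mv m u = mv m v by rewrite eu ev.
  move/H => [// | [[_ ev1] | [_ ev1]]].
  + by move: nw; rewrite -ev ev1 e eqxx.
  + by move: nw; rewrite -ev ev1 eqxx.
Qed.

Lemma good_econ X Y (m : mor X Y) s t : is_econ s t m -> good m.
Proof.
move=> h; have e := econ_bd h; have hV := Vcnt_econ _ h.
case: h => ne [d [c [su H]]].
apply: (good_del d c) => // w; rewrite hV (Ecnt_del _ d e).
by case: ifP.
Qed.

Lemma Lm_econ X Y (m : mor X Y) s t : is_econ s t m -> Lm m = [ffun _ => 0].
Proof.
move=> h; have e := econ_bd h; have hV := Vcnt_econ _ h.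
case: h => ne [d [c [su H]]].
apply/ffunP => w; rewrite !ffunE hV (Ecnt_del _ d e); by case: ifP.
Qed.

Lemma good_iso X Y (m : mor X Y) : is_iso m -> good m.
Proof.
case=> bv [bf [mjid c]].
have su : forall w, exists v, mv m v = w.
  by case: bv => g _ gK; move=> w; exists (g w); rewrite gK.
have Ec : forall w, Ecnt m w = 0.
  move=> w; apply/eqP; rewrite cards_eq0; apply/eqP/setP => x; by rewrite !inE mjid eqxx.
split => //.
- exact: bij_inj.
- by move=> x; rewrite !mjid.
- move=> x; rewrite mjid eqxx; case: bf => g gK Kg; apply/esym/codomP; exists (g x); by rewrite Kg.
- by move=> x; rewrite mjid.
- by move=> w; rewrite Ec Vcnt_inj //; exact: bij_inj.
Qed.

Lemma Lm_iso X Y (m : mor X Y) : is_iso m -> Lm m = [ffun _ => 0].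
Proof.
move=> h; have g := good_iso h; case: h => bv [bf [mjid c]].
apply/ffunP => w; rewrite !ffunE.
have -> : Ecnt m w = 0.
  apply/eqP; rewrite cards_eq0; apply/eqP/setP => x; by rewrite !inE mjid eqxx.
by rewrite Vcnt_inj //; [exact: bij_inj | exact: g_surj].
Qed.


Lemma ctd_good X Y (m : mor X Y) : ctd m -> good m.
Proof.
elim=> {X Y m}.
- move=> X Y m h; exact: good_iso.
- move=> X Y Z m1 m2 _ g1 h; apply: good_comp => //; exact: good_iso.
- move=> X Y Z m1 m2 s t _ g1 h; apply: good_comp => //; exact: good_econ h.
- move=> X Y Z m1 m2 s t _ g1 h; apply: good_comp => //; exact: good_lcon h.
Qed.

Lemma forest_good X Y (m : mor X Y) : forest m -> good m /\ Lm m = [ffun _ => 0].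
Proof.
elim=> {X Y m}.
- move=> X Y m h; split; [exact: good_iso | exact: Lm_iso].
- move=> X Y Z m1 m2 _ [g1 L1] h; have g2 := good_iso h.
  split; first exact: good_comp.
  apply/ffunP => w; rewrite Lm_comp // (Lm_iso h) L1 !ffunE big1 // => u _; by rewrite ffunE.
- move=> X Y Z m1 m2 s t _ [g1 L1] h; have g2 := good_econ h.
  split; first exact: good_comp.
  apply/ffunP => w; rewrite Lm_comp // (Lm_econ h) L1 !ffunE big1 // => u _; by rewrite ffunE.
Qed.

Lemma mor_ext X Y (m1 m2 : mor X Y) :
  mv m1 =1 mv m2 -> mf m1 =1 mf m2 -> mj m1 =1 mj m2 -> m1 = m2.
Proof.
case: m1 => a b c; case: m2 => a' b' c' /= H1 H2 H3.
have E1 : a = a' by apply/ffunP.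
have E2 : b = b' by apply/ffunP.
have E3 : c = c' by apply/ffunP.
by rewrite E1 E2 E3.
Qed.

Lemma comp_assoc W X Y Z (m1 : mor W X) (m2 : mor X Y) (m3 : mor Y Z) :
  injective (mf m1) -> injective (mf m2) ->
  comp m1 (comp m2 m3) = comp (comp m1 m2) m3.
Proof.
move=> i1 i2.
have i12 : injective (mf (comp m1 m2)).
  by move=> a b; rewrite !comp_mf => /i1 /i2.
apply: mor_ext => x; rewrite ?comp_mv ?comp_mf //.
case: (boolP (x \in codom (mf m1))) => [/codomP [y ->] | nx].
- rewrite comp_mj_img //.
  case: (boolP (y \in codom (mf m2))) => [/codomP [z ->] | ny].
  + rewrite comp_mj_img // -(comp_mf m1 m2 z) (@comp_mj_img _ _ _ (comp m1 m2) m3 z i12); by rewrite comp_mf.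
  + rewrite (comp_mj_nimg _ ny) comp_mj_nimg; first by rewrite comp_mj_img.
    by rewrite codom_comp_img.
- by rewrite (comp_mj_nimg _ nx) comp_mj_nimg ?(comp_mj_nimg _ nx) // codom_comp_nimg.
Qed.

Definition idm Y : mor Y Y := Mor [ffun v => v] [ffun f => f] [ffun f => f].

Lemma idm_iso Y : is_iso (idm Y).
Proof.
split; first by exists id => v; rewrite /= ffunE.
split; first by exists id => v; rewrite /= ffunE.
split; first by move=> x; rewrite /= ffunE.
by move=> f; rewrite /= !ffunE.
Qed.

Lemma comp_id_l X Y (m : mor X Y) : comp (idm X) m = m.
Proof.
apply: mor_ext => x.
- by rewrite comp_mv /= ffunE.
- by rewrite comp_mf /= ffunE.
have inj : injective (mf (idm X)) by move=> a b; rewrite /= !ffunE.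
have e : mf (idm X) x = x by rewrite /= ffunE.
by rewrite -{1}e (@comp_mj_img _ _ _ (idm X) m x inj) /= ffunE.
Qed.

Lemma comp_id_r X Y (m : mor X Y) : good m -> comp m (idm Y) = m.
Proof.
move=> g; apply: mor_ext => x.
- by rewrite comp_mv /= ffunE.
- by rewrite comp_mf /= ffunE.
case: (boolP (x \in codom (mf m))) => [/codomP [y ->] | nx].
- rewrite (@comp_mj_img _ _ _ m (idm Y) y (g_inj g)) /= ffunE.
  apply/esym/eqP; by rewrite (g_fix g) codom_f.
- by rewrite comp_mj_nimg.
Qed.


Lemma cstep_Lm Y (a b : cobj Y) : cstep a b -> loopnum a = loopnum b.
Proof.
case=> psi [fp e]; rewrite !loopnumE -e.
have [gp Lp] := forest_good fp.
apply/ffunP => w; rewrite Lm_comp //; last exact: ctd_good (cphiP b).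
rewrite Lp big1 ?addn0 // => u _; by rewrite ffunE.
Qed.

Lemma cconn_Lm Y (a b : cobj Y) : cconn a b -> loopnum a = loopnum b.
Proof.
elim=> {a b}.
- move=> a b; exact: cstep_Lm.
- by [].
- by move=> a b _ ->.
- by move=> a b c _ -> _ ->.
Qed.

Lemma claim_iso (Y Y' : agg) (psi : mor Y Y') (h : is_iso psi) (a : cobj Y) :
  loopnum (post_iso a h) = gsum psi (loopnum a).
Proof.
rewrite !loopnumE /=; apply/ffunP => w.
rewrite Lm_comp; [|exact: ctd_good (cphiP a) | exact: good_iso].
by rewrite (Lm_iso h) /gsum !ffunE add0n.
Qed.

Lemma claim_econ (Y Y' : agg) (psi : mor Y Y') (s t : F Y) (h : is_econ s t psi) (a : cobj Y) :
  loopnum (post_econ a h) = gsum psi (loopnum a).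
Proof.
rewrite !loopnumE /=; apply/ffunP => w.
rewrite Lm_comp; [|exact: ctd_good (cphiP a) | exact: good_econ h].
by rewrite (Lm_econ h) /gsum !ffunE add0n.
Qed.

Lemma claim_lcon (Y Y' : agg) (psi : mor Y Y') (s t : F Y) (h : is_lcon s t psi) (a : cobj Y) :
  loopnum (post_lcon a h) = gloop psi s (loopnum a).
Proof.
rewrite !loopnumE /=; apply/ffunP => w.
rewrite Lm_comp; [|exact: ctd_good (cphiP a) | exact: good_lcon h].
by rewrite (Lm_lcon h) /gloop !ffunE addnC.
Qed.

Lemma cstep_post Y Y' (h : mor Y Y') (a b : cobj Y)
  (pa : ctd (comp (cphi a) h)) (pb : ctd (comp (cphi b) h)) :
  cstep a b -> cstep (CObj pa) (CObj pb).
Proof.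
case=> psi [fp e]; exists psi; split => //=.
rewrite comp_assoc ?e //.
- exact: (g_inj (proj1 (forest_good fp))).
- exact: (g_inj (ctd_good (cphiP b))).
Qed.

Lemma cconn_post Y Y' (h : mor Y Y') (P : forall a : cobj Y, ctd (comp (cphi a) h))
  (a b : cobj Y) : cconn a b -> cconn (CObj (P a)) (CObj (P b)).
Proof.
elim=> {a b}.
- move=> a b st; apply: rst_step; exact: cstep_post.
- move=> a; exact: rst_refl.
- move=> a b _ H; exact: rst_sym.
- move=> a b c _ H1 _ H2; exact: rst_trans H1 H2.
Qed.

Lemma cconn_eq Y X (m1 m2 : mor X Y) (p1 : ctd m1) (p2 : ctd m2) :
  m1 = m2 -> cconn (CObj p1) (CObj p2).
Proof.
move=> e; subst m2; rewrite (proof_irrelevance _ p1 p2); exact: rst_refl.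
Qed.


Definition Yw (Y : agg) (w : V Y) : agg :=
  @Agg (V Y) (option (option (F Y)) : finType)
     (fun o => match o with Some (Some y) => bd y | _ => w end).

Definition lw (Y : agg) (w : V Y) : mor (Yw w) Y :=
  @Mor (Yw w) Y [ffun v : V Y => v] [ffun y : F Y => Some (Some y)]
      [ffun o : option (option (F Y)) => match o with None => Some None | Some None => None | _ => o end].

Lemma lw_lcon (Y : agg) (w : V Y) : is_lcon (None : F (Yw w)) (Some None) (@lw Y w).
Proof.
split; first by [].
split.
  split; first by [].
  split; first by move=> a b; rewrite !ffunE => -[].
  split.
    case=> [[y|]|]; rewrite /= ?eqxx ?andbF /=.
    - apply/codomP; exists y; by rewrite ffunE.
    - apply/negbTE/codomP => -[y]; by rewrite ffunE.
    - apply/negbTE/codomP => -[y]; by rewrite ffunE.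
  split; first by rewrite ffunE.
  split; first by rewrite ffunE.
  by case=> [[y|]|] // _ _; rewrite ffunE.
split; first by move=> y; rewrite /= !ffunE.
by exists id => v; rewrite /= ffunE.
Qed.

Lemma Vcnt_le1 X Y (m : mor X Y) w : injective (mv m) -> Vcnt m w <= 1.
Proof.
move=> inj; rewrite /Vcnt; apply/card_le1_eqP => a b; rewrite !inE => /eqP ea /eqP eb.
apply: inj; by rewrite ea eb.
Qed.

Section Fac.
Variables (X Y : agg) (m : mor X Y) (s : F X) (w : V Y).
Hypotheses (gm : good m) (im : injective (mv m)) (ns : mj m s != s) (ew : mv m (bd s) = w).

Definition mfac : mor X (Yw w) :=
  @Mor X (Yw w) [ffun v : V X => (mv m v : V Y)]
      [ffun o : option (option (F Y)) => match o with None => s | Some None => mj m s | Some (Some y) => mf m y end]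
      [ffun x => if (x == s) || (x == mj m s) then x else mj m x].

Lemma s_nimg : s \notin codom (mf m).
Proof. by rewrite -(g_fix gm). Qed.
Lemma t_nimg : mj m s \notin codom (mf m).
Proof. by rewrite -(g_fix gm) (g_inv gm) eq_sym. Qed.

Lemma mfac_inj : injective (mf mfac).
Proof.
  case=> [[a|]|] [[b|]|]; rewrite !ffunE // => e.
  all: try by rewrite (g_inj gm e).
  all: try by move: t_nimg; rewrite -e codom_f.
  all: try by move: t_nimg; rewrite e codom_f.
  all: try by move: s_nimg; rewrite -e codom_f.
  all: try by move: s_nimg; rewrite e codom_f.
  all: try by move: ns; rewrite -e eqxx.
  all: try by move: ns; rewrite e eqxx.
Qed.

Lemma mfac_comp : comp mfac (@lw Y w) = m.
Proof.
have imf := mfac_inj.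
apply: mor_ext => x.
- by rewrite comp_mv /= !ffunE.
- by rewrite comp_mf /= !ffunE.
case: (eqVneq x s) => [-> | xs].
  have -> : s = mf mfac None by rewrite ffunE.
  by rewrite (@comp_mj_img _ _ _ mfac (@lw Y w) None imf) /= !ffunE //.
case: (eqVneq x (mj m s)) => [-> | xt].
  have -> : mj m s = mf mfac (Some None) by rewrite ffunE.
  by rewrite (@comp_mj_img _ _ _ mfac (@lw Y w) (Some None) imf) /= !ffunE (g_inv gm).
case: (boolP (x \in codom (mf m))) => [/codomP [y ->] | nx].
  have -> : mf m y = mf mfac (Some (Some y)) by rewrite ffunE.
  rewrite (@comp_mj_img _ _ _ mfac (@lw Y w) _ imf) /= !ffunE.
  by apply/esym/eqP; rewrite (g_fix gm) codom_f.
rewrite comp_mj_nimg; first by rewrite /= ffunE (negbTE xs) (negbTE xt).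
apply/codomP => -[[[y|]|] e]; move: e; rewrite ffunE => e.
- by case/negP: nx; rewrite e codom_f.
- by rewrite e eqxx in xt.
- by rewrite e eqxx in xs.
Qed.

Lemma mfac_mj x : mj mfac x = if (x == s) || (x == mj m s) then x else mj m x.
Proof. by rewrite /= ffunE. Qed.

Lemma mfac_injv : injective (mv mfac).
Proof. move=> a b; rewrite /= !ffunE; exact: im. Qed.

Lemma mfac_good : good mfac.
Proof.
have mjs : mj m (mj m s) = s := g_inv gm s.
split.
- exact: mfac_inj.
- case=> [[y|]|]; rewrite /= !ffunE.
  + exact: (g_compat gm).
  + by rewrite (g_bd gm).
  + by [].
- move=> x; rewrite !mfac_mj.
  case: (eqVneq x s) => [-> | xs] /=; first by rewrite eqxx.
  case: (eqVneq x (mj m s)) => [-> | xt] /=; first by rewrite eqxx orbT.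
  have -> : (mj m x == s) = false.
    apply/negbTE; apply: contra xt => /eqP e; by rewrite -e (g_inv gm).
  have -> : (mj m x == mj m s) = false.
    apply/negbTE; apply: contra xs => /eqP e; by rewrite -(g_inv gm x) e mjs.
  by rewrite /= (g_inv gm).
- move=> x; rewrite mfac_mj.
  case: (eqVneq x s) => [-> | xs] /=.
    by rewrite eqxx; apply/esym/codomP; exists None; rewrite ffunE.
  case: (eqVneq x (mj m s)) => [-> | xt] /=.
    by rewrite eqxx; apply/esym/codomP; exists (Some None); rewrite ffunE.
  rewrite (g_fix gm); apply/codomP/codomP => -[o e].
  + by exists (Some (Some o)); rewrite ffunE.
  + move: e; case: o => [[y|]|]; rewrite ffunE => e.
    * by exists y.
    * by rewrite e eqxx in xt.
    * by rewrite e eqxx in xs.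
- move=> x; rewrite mfac_mj /= !ffunE.
  by case: ifP => // _; rewrite (g_bd gm).
- move=> u; have [v ev] := g_surj gm u; by exists v; rewrite /= ffunE.
- move=> u; apply: leq_trans (Vcnt_le1 u mfac_injv) _; exact: leq_addl.
Qed.

Lemma mfac_Lm u : Lm m u = (u == w) + Lm mfac u.
Proof.
rewrite -{1}mfac_comp Lm_comp; [|exact: mfac_good|exact: good_lcon (lw_lcon w)].
rewrite (Lm_lcon (lw_lcon w)) ffunE /= ffunE.
congr (_ + _); rewrite (big_pred1 u) // => v; by rewrite /= ffunE.
Qed.

End Fac.


Lemma inj_surj_bij (T T' : finType) (f : T -> T') :
  injective f -> (forall y, exists x, f x = y) -> bijective f.
Proof.
move=> inj su; apply: inj_card_bij => //.
rewrite -(card_codom inj); apply: subset_leq_card; apply/subsetP => y _.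
by have [x <-] := su y; rewrite codom_f.
Qed.

Lemma sum_delta (T : finType) (w : T) : \sum_(u : T) (u == w : nat) = 1.
Proof.
rewrite (bigD1 w) //= eqxx big1 // => u /negbTE -> //.
Qed.

Lemma good_fixed_iso X Y (m : mor X Y) : good m -> injective (mv m) ->
  (forall x, mj m x = x) -> is_iso m.
Proof.
move=> g im fx; split; first exact: inj_surj_bij (g_surj g).
split; last by split => //; exact: g_compat g.
apply: inj_surj_bij (g_inj g) _ => x.
have : x \in codom (mf m) by rewrite -(g_fix g) fx.
by case/codomP => y ->; exists y.
Qed.

Lemma sum_mfac X Y (m : mor X Y) s w (gm : good m) (im : injective (mv m))
  (ns : mj m s != s) (ew : mv m (bd s) = w) :
  \sum_(u : V Y) Lm m u = (\sum_(u : V Y) Lm (mfac m s w) u).+1.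
Proof.
rewrite (eq_bigr (fun u => (u == w : nat) + Lm (mfac m s w) u)); last first.
  by move=> u _; rewrite (mfac_Lm gm im ns ew).
by rewrite big_split /= sum_delta.
Qed.

Lemma reduced_ctd n : forall X Y (m : mor X Y), good m -> injective (mv m) ->
  \sum_(u : V Y) Lm m u <= n -> ctd m.
Proof.
elim: n => [|n IH] X Y m g im.
- rewrite leqn0 => /eqP S0.
  case: (pickP (fun x => mj m x != x)) => [s ns | fx].
    by move: S0; rewrite (sum_mfac g im ns (erefl _)).
  apply: ctd_iso; apply: good_fixed_iso => // x; apply/eqP; have := fx x; by move/negbFE.
- move=> Sn.
  case: (pickP (fun x => mj m x != x)) => [s ns | fx].
    rewrite -(mfac_comp (mv m (bd s)) g ns).
    apply: (ctd_comp_lcon _ (lw_lcon _)); apply: IH.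
    + exact: mfac_good g im ns (erefl _).
    + exact: mfac_injv im.
    + by move: Sn; rewrite (sum_mfac g im ns (erefl _)).
  apply: ctd_iso; apply: good_fixed_iso => // x; apply/eqP; have := fx x; by move/negbFE.
Qed.

Lemma reduced_ctd' X Y (m : mor X Y) : good m -> injective (mv m) -> ctd m.
Proof. move=> g im; exact: (reduced_ctd g im (leqnn _)). Qed.

Lemma Lm_pos X Y (m : mor X Y) s : good m -> injective (mv m) -> mj m s != s ->
  0 < Lm m (mv m (bd s)).
Proof. move=> g im ns; by rewrite (mfac_Lm g im ns (erefl _)) eqxx. Qed.

Lemma Lm_pos_inv X Y (m : mor X Y) w : good m -> injective (mv m) -> 0 < Lm m w ->
  exists2 s, mj m s != s & mv m (bd s) = w.
Proof.
move=> g im.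
case: (set_0Vmem [set x | (mj m x != x) && (mv m (bd x) == w)]) => [E0 | [x]].
  rewrite /Lm ffunE /Ecnt E0 cards0 (Vcnt_inj im (g_surj g w)) //.
by rewrite inE => /andP [h1 /eqP h2] _; exists x.
Qed.

Lemma Lm_zero X Y (m : mor X Y) w : good m -> injective (mv m) ->
  (forall x, mj m x = x) -> Lm m w = 0.
Proof.
move=> g im fx; case: (posnP (Lm m w)) => // /(Lm_pos_inv g im) [s ns _].
by rewrite fx eqxx in ns.
Qed.

Lemma iso_conn Y X (m : mor X Y) (p : ctd m) (h : is_iso m) :
  cconn (CObj p) (CObj (ctd_iso (idm_iso Y))).
Proof.
apply: rst_step; exists m; split; first exact: forest_iso.
by rewrite comp_id_r //; exact: good_iso.
Qed.

Lemma cc_trans Y (a b c : cobj Y) : cconn a b -> cconn b c -> cconn a c.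
Proof. move=> h1 h2; exact: rst_trans h1 h2. Qed.

Lemma reduced_conn n : forall Y (X1 X2 : agg) (m1 : mor X1 Y) (m2 : mor X2 Y)
  (p1 : ctd m1) (p2 : ctd m2), injective (mv m1) -> injective (mv m2) ->
  Lm m1 = Lm m2 -> \sum_(u : V Y) Lm m1 u <= n -> cconn (CObj p1) (CObj p2).
Proof.
elim: n => [|n IH] Y X1 X2 m1 m2 p1 p2 i1 i2 eL Sn;
  have g1 := ctd_good p1; have g2 := ctd_good p2.
all: case: (pickP (fun x => mj m1 x != x)) => [s ns | fx]; last first.
all: try (have fx1 : forall x, mj m1 x = x by move=> x; apply/eqP; have := fx x; move/negbFE).
all: try (have fx2 : forall x, mj m2 x = x;
   [ move=> x; apply/eqP; apply/negP => /negP nx;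
     have := Lm_pos g2 i2 nx; by rewrite -eL (Lm_zero _ g1 i1 fx1) |]).
all: try (apply: rst_trans (iso_conn p1 (good_fixed_iso g1 i1 fx1)) _;
   apply: rst_sym; exact: iso_conn p2 (good_fixed_iso g2 i2 fx2)).
- by move: Sn; rewrite (sum_mfac g1 i1 ns (erefl _)).
- set w := mv m1 (bd s).
  have [s' ns' ew'] : exists2 s', mj m2 s' != s' & mv m2 (bd s') = w.
    apply: Lm_pos_inv => //; rewrite -eL; exact: Lm_pos.
  pose a' := CObj (reduced_ctd' (mfac_good g1 i1 ns (erefl w)) (mfac_injv (s := s) (w := w) i1)).
  pose b' := CObj (reduced_ctd' (mfac_good g2 i2 ns' ew') (mfac_injv (s := s') (w := w) i2)).
  pose P := fun c : cobj (Yw w) => ctd_comp_lcon (cphiP c) (lw_lcon w).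
  have H1 : cconn (CObj p1) (CObj (P a')) by apply: cconn_eq; rewrite /= mfac_comp.
  have H2 : cconn (CObj (P b')) (CObj p2) by apply: cconn_eq; rewrite /= mfac_comp.
  apply: (cc_trans H1); apply: (cc_trans _ H2); apply: cconn_post.
  apply: IH => /=.
  + exact: mfac_injv.
  + exact: mfac_injv.
  + apply/ffunP => u.
    have := mfac_Lm g1 i1 ns (erefl w) u; have := mfac_Lm g2 i2 ns' ew' u.
    rewrite eL => -> /eqP; by rewrite eqn_add2l => /eqP.
  + by move: Sn; rewrite (sum_mfac g1 i1 ns (erefl w)).
Qed.

Lemma exists_L n : forall Y (g : {ffun V Y -> nat}), \sum_(u : V Y) g u <= n ->
  exists a : cobj Y, loopnum a = g.
Proof.
elim: n => [|n IH] Y g Sn.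
all: case: (pickP (fun w => 0 < g w)) => [w gw | g0]; last first.
all: try (exists (CObj (ctd_iso (idm_iso Y))); rewrite loopnumE /= (Lm_iso (idm_iso Y));
   apply/ffunP => u; rewrite !ffunE; have := g0 u; by case: (g u)).
- move: Sn; rewrite leqn0 (bigD1 w) //= addn_eq0 => /andP [/eqP e _].
  by rewrite e in gw.
- pose g' : {ffun V (Yw w) -> nat} := [ffun u => g u - (u == w)].
  have eg : forall u, g u = g' u + (u == w).
    move=> u; rewrite ffunE; case: (eqVneq u w) => [-> | _]; last by rewrite subn0 addn0.
    by rewrite subnK.
  have [a' La'] : exists a' : cobj (Yw w), loopnum a' = g'.
    apply: IH; move: Sn; rewrite (eq_bigr _ (fun u _ => eg u)) big_split /= sum_delta.
    by rewrite addn1 ltnS.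
  exists (post_lcon a' (lw_lcon w)); rewrite claim_lcon La'.
  apply/ffunP => u; rewrite /gloop !ffunE eg.
  congr (_ + _); rewrite (big_pred1 u) // => v; by rewrite /= ffunE.
Qed.


Section Econ.
Variables (Z Y Y1 : agg) (rho : mor Z Y) (h : mor Y Y1) (s t : F Y).
Hypotheses (grho : good rho) (irho : injective (mv rho)) (he : is_econ s t h).

Definition m0 := comp rho h.
Definition s0 := mf rho s.
Definition t0 := mf rho t.
Definition Pz (x : F Z) := (x != s0) && (x != t0).
Definition FZ' : finType := {x : F Z | Pz x}.
Definition Z' : agg := @Agg (V Y1) FZ' (fun x => mv m0 (bd (val x))).

Lemma gm0 : good m0.
Proof. apply: good_comp grho (good_econ he). Qed.

Lemma hdel : deletes_st s t h.
Proof. by case: he => _ []. Qed.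

Lemma st0 : s0 != t0.
Proof. rewrite /s0 /t0 (inj_eq (g_inj grho)); by case: hdel. Qed.

Lemma mj_s0 : mj m0 s0 = t0.
Proof. rewrite /m0 /s0 (@comp_mj_img _ _ _ rho h s (g_inj grho)) /t0. have [_ [_ [_ [e _]]]] := hdel. by rewrite e. Qed.

Lemma mj_t0 : mj m0 t0 = s0.
Proof. by rewrite -mj_s0 (g_inv gm0). Qed.

Lemma Pz_mj x : Pz x -> Pz (mj m0 x).
Proof.
case/andP => xs xt; apply/andP; split.
- apply: contra xt => /eqP e; by rewrite -(g_inv gm0 x) e mj_s0.
- apply: contra xs => /eqP e; by rewrite -(g_inv gm0 x) e mj_t0.
Qed.

Lemma mf_ok y : Pz (mf m0 y).
Proof.
have := hdel => -[_ [_ [cod _]]].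
have := codom_f (mf h) y; rewrite cod => /andP [a b].
by rewrite /Pz /m0 comp_mf /s0 /t0 !(inj_eq (g_inj grho)) a b.
Qed.

Definition rho' : mor Z' Y1 :=
  @Mor Z' Y1 [ffun v : V Y1 => v] [ffun y => (exist _ (mf m0 y) (mf_ok y) : FZ')]
     [ffun x : FZ' => insubd x (mj m0 (val x))].

Definition e0 : mor Z Z' :=
  @Mor Z Z' [ffun v => mv m0 v] [ffun x : FZ' => val x]
     [ffun x => if x == s0 then t0 else if x == t0 then s0 else x].


Lemma mv_rho_bd u : (mv rho u == bd s) = (u == bd s0).
Proof. by rewrite /s0 -{1}(g_compat grho s) (inj_eq irho). Qed.
Lemma mv_rho_bdt u : (mv rho u == bd t) = (u == bd t0).
Proof. by rewrite /t0 -{1}(g_compat grho t) (inj_eq irho). Qed.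

Lemma e0_econ : is_econ s0 t0 e0.
Proof.
have [nst [_ [_ [su H]]]] := he.
split.
  apply: contra nst => /eqP e.
  by rewrite -(g_compat grho s) -(g_compat grho t) -/s0 -/t0 e.
split.
  split; first exact: st0.
  split; first by move=> a b; rewrite !ffunE; exact: val_inj.
  split.
    move=> x; apply/codomP/idP => [[x' ->] | Px]; first by rewrite ffunE; exact: valP x'.
    by exists (exist _ x Px : FZ'); rewrite ffunE.
  split; first by rewrite ffunE eqxx.
  split; first by rewrite ffunE eq_sym (negbTE st0) eqxx.
  by move=> x xs xt; rewrite ffunE (negbTE xs) (negbTE xt).
split; first by move=> x; rewrite /= !ffunE.
split; first by move=> u; have [v ev] := g_surj gm0 u; exists v; rewrite /= ffunE.
have me : forall x, mv e0 x = mv h (mv rho x).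
  by move=> x; rewrite -[RHS](comp_mv rho h) /= !ffunE.
move=> u v; rewrite !me; split.
- move/H => [e | [[e1 e2] | [e1 e2]]].
  + by left; exact: irho.
  + right; left; split; apply/eqP; by rewrite -?mv_rho_bd -?mv_rho_bdt ?e1 ?e2.
  + right; right; split; apply/eqP; by rewrite -?mv_rho_bd -?mv_rho_bdt ?e1 ?e2.
- move=> [-> // | [[-> ->] | [-> ->]]]; apply/H; right.
  + left; split; apply/eqP; by rewrite ?mv_rho_bd ?mv_rho_bdt.
  + right; split; apply/eqP; by rewrite ?mv_rho_bd ?mv_rho_bdt.
Qed.

Lemma val_mj' (x : FZ') : val (mj rho' x) = mj m0 (val x).
Proof. rewrite ffunE insubdK //; apply: Pz_mj; exact: valP x. Qed.

Lemma e0_comp : comp e0 rho' = m0.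
Proof.
have ie : injective (mf e0) by move=> a b; rewrite !ffunE; exact: val_inj.
apply: mor_ext => x.
- by rewrite comp_mv /= !ffunE.
- by rewrite comp_mf !ffunE.
case: (boolP (Pz x)) => Px.
  have -> : x = mf e0 (exist _ x Px : FZ') by rewrite ffunE.
  rewrite (@comp_mj_img _ _ _ e0 rho' _ ie) ffunE; apply: (etrans (val_mj' _)); congr (mj m0 _); by rewrite /e0 /= ffunE.
rewrite comp_mj_nimg; last first.
  apply/codomP => -[x' e]; move: Px; rewrite e ffunE; by rewrite (valP x').
have me : forall y, mj e0 y = if y == s0 then t0 else if y == t0 then s0 else y.
  by move=> y; rewrite /e0 /= ffunE.
rewrite me; move: Px; rewrite /Pz negb_and !negbK.
case: (eqVneq x s0) => [-> _ | _ /= /eqP ->]; first by rewrite mj_s0.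
by rewrite eqxx mj_t0.
Qed.

Lemma val_mf' y : val (mf rho' y) = mf m0 y.
Proof. by rewrite ffunE. Qed.

Lemma rho'_inj : injective (mv rho').
Proof. by move=> a b; rewrite !ffunE. Qed.

Lemma rho'_good : good rho'.
Proof.
split.
- move=> a b e; apply: (g_inj gm0); move: (congr1 val e); by rewrite !val_mf'.
- move=> y; rewrite [mv rho' _]ffunE.
  change (mv m0 (bd (val (mf rho' y))) = bd y); by rewrite val_mf' (g_compat gm0).
- by move=> x; apply: val_inj; rewrite !val_mj' (g_inv gm0).
- move=> x; rewrite -(inj_eq val_inj) val_mj' (g_fix gm0).
  apply/codomP/codomP => -[y e].
  + exists y; apply: val_inj; by rewrite val_mf' e.
  + exists y; by rewrite e val_mf'.
- move=> x; rewrite ![mv rho' _]ffunE.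
  change (mv m0 (bd (val (mj rho' x))) = mv m0 (bd (val x))); by rewrite val_mj' (g_bd gm0).
- by move=> u; exists u; rewrite ffunE.
- move=> u; apply: leq_trans (Vcnt_le1 u rho'_inj) _; exact: leq_addl.
Qed.

End Econ.


Lemma RD X Y (m : mor X Y) (p : ctd m) :
  exists r : cobj Y, injective (mv (cphi r)) /\ cconn (CObj p) r.
Proof.
have p0 := p; move: p; elim: p0 => {X Y m}.
- move=> X Y m h p; rewrite (proof_irrelevance _ p (ctd_iso h)); exists (CObj (ctd_iso h)); split; last exact: rst_refl.
  by have [bv _] := h; exact: bij_inj bv.
- move=> X Y Z m1 m2 p1 IH1 h p; have [r1 [i1 c1]] := IH1 p1.
  rewrite (proof_irrelevance _ p (ctd_comp_iso p1 h)).
  exists (CObj (ctd_comp_iso (cphiP r1) h)); split.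
  + move=> a b; rewrite /= !comp_mv => /(bij_inj (proj1 h)); exact: i1.
  + exact: (cconn_post (fun c : cobj _ => ctd_comp_iso (cphiP c) h) c1).
- move=> X Y Z m1 m2 s t p1 IH1 h p; have [r1 [i1 c1]] := IH1 p1.
  rewrite (proof_irrelevance _ p (ctd_comp_econ p1 h)).
  have g := ctd_good (cphiP r1).
  exists (CObj (reduced_ctd' (rho'_good g h) (rho'_inj (grho := g) (he := h)))); split.
    exact: rho'_inj.
  apply: (cc_trans (cconn_post (fun c : cobj _ => ctd_comp_econ (cphiP c) h) c1)).
  apply: rst_step; exists (e0 (cphi r1) m2 s t); split.
  + have := forest_comp_econ (forest_iso (idm_iso _)) (e0_econ g i1 h).
    by rewrite comp_id_l.
  + by rewrite /= e0_comp.
- move=> X Y Z m1 m2 s t p1 IH1 h p; have [r1 [i1 c1]] := IH1 p1.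
  rewrite (proof_irrelevance _ p (ctd_comp_lcon p1 h)).
  exists (CObj (ctd_comp_lcon (cphiP r1) h)); split.
  + have [_ [_ [_ bv]]] := h.
    move=> a b; rewrite /= !comp_mv => /(bij_inj bv); exact: i1.
  + exact: (cconn_post (fun c : cobj _ => ctd_comp_lcon (cphiP c) h) c1).
Qed.

Theorem proposition5p4 :
  (forall (Y : agg) (a b : cobj Y), cconn a b <-> loopnum a = loopnum b) /\
  (forall (Y : agg) (g : genus_val Y), exists a : cobj Y, loopnum a = g) /\
  (forall (Y Y' : agg) (psi : mor Y Y') (h : is_iso psi) (a : cobj Y),
      loopnum (post_iso a h) = gsum psi (loopnum a)) /\
  (forall (Y Y' : agg) (psi : mor Y Y') (s t : F Y) (h : is_econ s t psi) (a : cobj Y),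
      loopnum (post_econ a h) = gsum psi (loopnum a)) /\
  (forall (Y Y' : agg) (psi : mor Y Y') (s t : F Y) (h : is_lcon s t psi) (a : cobj Y),
      loopnum (post_lcon a h) = gloop psi s (loopnum a)).
Proof.
split.
  move=> Y a b; split; first exact: cconn_Lm.
  case: a => Xa ma pa; case: b => Xb mb pb eL.
  have [[Xr mr pr] [ir cr]] := RD pa.
  have [[Xs ms ps] [is2 cs]] := RD pb.
  apply: (cc_trans cr); apply: (cc_trans _ (rst_sym _ _ _ _ cs)).
  apply: (@reduced_conn (\sum_u Lm mr u)) => //.
  have := cconn_Lm cr; have := cconn_Lm cs; rewrite !loopnumE /= => <- <-.
  exact: eL.
split; first by move=> Y g; exact: (@exists_L (\sum_u g u)).
split; first exact: claim_iso.
split; first exact: claim_econ.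
exact: claim_lcon.
Qed.
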